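(* Every $\sigma$-compact topological gyrogroup $G$ admits an injective groupoid homomorphism, which is a homeomorphism onto its image, onto a closed subgyrogroup of a $\sigma$-compact, pathwise connected, locally pathwise connected topological gyrogroup.
   Context: A gyrogroup is a set $G$ with a binary operation $\oplus$ such that: (G1) there is a unique identity $0$ with $0\oplus a=a=a\oplus 0$; (G2) each $x$ has a unique inverse $\ominus x$ with $\ominus x\oplus x=0=x\oplus(\ominus x)$; (G3) for all $x,y$ there is an automorphism $\mathrm{gyr}[x,y]$ of $(G,\oplus)$ with $x\oplus(y\oplus z)=(x\oplus y)\oplus \mathrm{gyr}[x,y](z)$ for all $z$; (G4) $\mathrm{gyr}[x\oplus y,y]=\mathrm{gyr}[x,y]$. A topological gyrogroup is a gyrogroup with a topology (all spaces are assumed $T_1$) such that $\oplus$ is jointly continuous and $x\mapsto\ominus x$ is continuous. A subgyrogroup of $G$ is a nonempty $H\subseteq G$ that is a gyrogroup under the inherited operation and such that for all $a,b\in H$ the restriction of $\mathrm{gyr}[a,b]$ to $H$ is an automorphism of $H$. A groupoid homomorphism is a map $\varphi$ with $\varphi(x\oplus y)=\varphi(x)\oplus\varphi(y)$. A space is $\sigma$-compact if it is a countable union of compact subsets. *)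

(* Defs.v *)
From HB Require Import structures.
From mathcomp Require Import all_boot all_order all_algebra.
From mathcomp Require Import all_classical all_reals all_analysis.
From mathcomp Require Import Rstruct Rstruct_topology.
From Stdlib Require Import Rdefinitions.

Set Implicit Arguments.
Unset Strict Implicit.
Unset Printing Implicit Defensive.

Import Order.TTheory GRing.Theory Num.Theory.
Local Open Scope classical_set_scope.

Section Gyro.
Variable T : Type.
Variable op : T -> T -> T.
Variable gyr : T -> T -> T -> T.

(** With S = setT this is exactly axioms (G1)-(G4); for a general S it says
    that S is closed under op, is a gyrogroup under the inherited operation,
    and each gyr[a,b] (a,b in S) restricts to an automorphism of S. *)
Definition gyrogroup_on (S : set T) : Prop :=
  (forall a b, S a -> S b -> S (op a b)) /\
  exists2 e, S e &
  [/\
      ((forall a, S a -> op e a = a /\ op a e = a) /\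
       (forall e', S e' -> (forall a, S a -> op e' a = a /\ op a e' = a) -> e' = e)),
      (forall x, S x -> exists2 y, S y &
          [/\ op y x = e, op x y = e &
              forall y', S y' -> op y' x = e -> op x y' = e -> y' = y]),
      (forall x y, S x -> S y ->
          [/\ (forall z, S z -> S (gyr x y z)),
              (forall z w, S z -> S w -> gyr x y z = gyr x y w -> z = w),
              (forall w, S w -> exists2 z, S z & gyr x y z = w) &
              (forall z w, S z -> S w -> gyr x y (op z w) = op (gyr x y z) (gyr x y w))]),
      (forall x y z, S x -> S y -> S z -> op x (op y z) = op (op x y) (gyr x y z)) &
      (forall x y z, S x -> S y -> S z -> gyr (op x y) y z = gyr x y z)].

Definition gyrogroup : Prop := gyrogroup_on setT.

Definition subgyrogroup (S : set T) : Prop := S !=set0 /\ gyrogroup_on S.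

End Gyro.

(** Topological gyrogroup (T1 assumed, as in the paper). *)
Definition topological_gyrogroup (T : topologicalType)
    (op : T -> T -> T) (gyr : T -> T -> T -> T) : Prop :=
  [/\ gyrogroup op gyr,
      accessible_space T,
      continuous (fun p : T * T => op p.1 p.2) &
      exists e : T, exists inv : T -> T,
        [/\ (forall a, op e a = a /\ op a e = a),
            (forall x, op (inv x) x = e /\ op x (inv x) = e) &
            continuous inv]].

Definition sigma_compact (T : topologicalType) : Prop :=
  exists K : nat -> set T, (forall n, compact (K n)) /\ \bigcup_n K n = setT.

Definition path_connected_set (T : topologicalType) (A : set T) : Prop :=
  forall x y, A x -> A y ->
    exists f : R -> T, [/\ {within `[0%R, 1%R], continuous f},
                           f 0%R = x, f 1%R = y & f @` `[0%R, 1%R] `<=` A].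

Definition path_connected_space (T : topologicalType) : Prop :=
  path_connected_set (@setT T).

Definition locally_path_connected (T : topologicalType) : Prop :=
  forall (x : T) (U : set T), nbhs x U ->
    exists V : set T, [/\ open V, V x, V `<=` U & path_connected_set V].

Definition groupoid_hom (G H : Type) (opG : G -> G -> G) (opH : H -> H -> H)
    (phi : G -> H) : Prop :=
  forall x y, phi (opG x y) = opH (phi x) (phi y).

Definition embedding_onto_image (G H : topologicalType) (phi : G -> H) : Prop :=
  [/\ injective phi, continuous phi &
      forall U : set G, open U -> exists V : set H, open V /\ phi @` U = range phi `&` V].

(* Main.v *)
Require Import Defs.
From HB Require Import structures.
From mathcomp Require Import all_boot all_order all_algebra.
From mathcomp Require Import all_classical all_reals all_analysis.
From mathcomp Require Import Rstruct Rstruct_topology.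
From mathcomp Require Import lra.
Set Implicit Arguments. Unset Strict Implicit. Unset Printing Implicit Defensive.
Import Order.TTheory GRing.Theory Num.Theory.
Local Open Scope classical_set_scope.
Local Open Scope ring_scope.

Notation RR := Rdefinitions.R.

Definition I01 (s : RR) : bool := (0 <= s) && (s < 1).

Section Step.
Context (G : topologicalType) (e : G).
Definition mask (F : RR -> G) : RR -> G := fun s => if I01 s then F s else e.

Definition stepfun (f : RR -> G) : Prop :=
  (forall s, ~~ I01 s -> f s = e) /\
  exists B : seq RR, forall s t, 0 <= s -> s <= t -> t < 1 ->
     (forall b, b \in B -> ~~ ((s < b) && (b <= t))) -> f s = f t.
End Step.

Definition Hc (G : topologicalType) (e : G) := {f : RR -> G | stepfun e f}.
Arguments Hc : clear implicits.
HB.instance Definition _ G e := gen_eqMixin (Hc G e).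
HB.instance Definition _ G e := gen_choiceMixin (Hc G e).

Definition lam (A : set RR) : \bar RR := lebesgue_measure A.
Definition bad (G : Type) (f g : RR -> G) (U : G -> set G) :=
  [set s | I01 s /\ ~ U (f s) (g s)].
Definition goodU (G : topologicalType) (U : G -> set G) := forall x, open (U x) /\ U x x.
Definition Nb (G : topologicalType) e (f : Hc G e) U (eps : RR) :=
  [set g : Hc G e | (lam (bad (sval f) (sval g) U) < eps%:E)%E].
Definition opn (G : topologicalType) e (A : set (Hc G e)) :=
  forall f, A f -> exists U eps, [/\ goodU U, 0 < eps & Nb f U eps `<=` A].

Lemma lam_le A B : A `<=` B -> (lam A <= lam B)%E.
Proof. move=> AB; rewrite /lam /lebesgue_measure /lebesgue_stieltjes_measure /measure_extension.
exact: le_outer_measure. Qed.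

Lemma lam_U A B : (lam (A `|` B) <= lam A + lam B)%E.
Proof. rewrite /lam /lebesgue_measure /lebesgue_stieltjes_measure /measure_extension.
exact: outer_measureU2. Qed.

Lemma lam_ge0 A : (0 <= lam A)%E.
Proof. rewrite /lam. exact: measure_ge0. Qed.

Section Topo.
Context (G : topologicalType) (e : G).

Lemma opnT : opn (@setT (Hc G e)).
Proof.
move=> f _; exists (fun _ => setT), 1; split => //.
by move=> x; split => //; exact: openT.
Qed.

Lemma Nb_mono (f : Hc G e) U1 U2 e1 e2 : (forall x y, U2 x y -> U1 x y) -> e2 <= e1 ->
  Nb f U2 e2 `<=` Nb f U1 e1.
Proof.
move=> U21 le g; rewrite /Nb /= => H; apply: (le_lt_trans _ (lt_le_trans H _)).
  by apply: lam_le => s [I nU]; split => // /U21.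
by rewrite lee_fin.
Qed.

Lemma opnI : setI_closed (@opn G e).
Proof.
move=> A B oA oB f [Af Bf].
have [U1 [e1 [g1 p1 s1]]] := oA f Af; have [U2 [e2 [g2 p2 s2]]] := oB f Bf.
exists (fun x => U1 x `&` U2 x), (Num.min e1 e2); split.
- move=> x; case: (g1 x) => o1 u1; case: (g2 x) => o2 u2; split; [exact: openI|by []].
- by rewrite lt_min p1 p2.
- move=> g Hg; split.
    by apply: s1; apply: (Nb_mono (U2 := fun x => U1 x `&` U2 x) (e2 := Num.min e1 e2)) => //;
      [move=> x y []|rewrite ge_min lexx].
  by apply: s2; apply: (Nb_mono (U2 := fun x => U1 x `&` U2 x) (e2 := Num.min e1 e2)) => //;
      [move=> x y []|rewrite ge_min lexx orbT].
Qed.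

Lemma opnU (I : Type) (F : I -> set (Hc G e)) : (forall i, opn (F i)) -> opn (\bigcup_i F i).
Proof.
move=> oF f [i _ Fi]; have [U [eps [gU pe sN]]] := oF i f Fi.
by exists U, eps; split => // g /sN Fg; exists i.
Qed.

End Topo.

HB.instance Definition _ G e := isOpenTopological.Build (Hc G e) (@opnT G e) (@opnI G e) (@opnU G e).


Section Nbhs.
Context (G : topologicalType) (e : G).
Lemma openHE (A : set (Hc G e)) : open A = opn A.
Proof. by []. Qed.
Lemma nbhsHE (f : Hc G e) A : nbhs f A = exists B, [/\ opn B, B f & B `<=` A].
Proof. by []. Qed.
End Nbhs.

Section StepLemmas.
Context (G : topologicalType) (e : G).

Lemma maskI (F : RR -> G) s : I01 s -> mask e F s = F s.
Proof. by rewrite /mask => ->. Qed.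
Lemma maskO (F : RR -> G) s : ~~ I01 s -> mask e F s = e.
Proof. by rewrite /mask => /negbTE ->. Qed.

Lemma I01_of s t : 0 <= s -> s <= t -> t < 1 -> I01 s /\ I01 t.
Proof. move=> s0 st t1; rewrite /I01; split; apply/andP; split => //; lra. Qed.

Lemma step_comb3 (F : G -> G -> G -> G) f g h :
  stepfun e f -> stepfun e g -> stepfun e h ->
  stepfun e (mask e (fun s => F (f s) (g s) (h s))).
Proof.
move=> [_ [Bf Hf]] [_ [Bg Hg]] [_ [Bh Hh]]; split; first by move=> s; exact: maskO.
exists (Bf ++ Bg ++ Bh) => s t s0 st t1 nB.
have [Is It] := I01_of s0 st t1; rewrite !maskI //.
rewrite (Hf s t) ?(Hg s t) ?(Hh s t) // => b bB; apply: nB; rewrite !mem_cat bB ?orbT //.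
Qed.

Lemma step_piece (a b : RR) f g h :
  stepfun e f -> stepfun e g -> stepfun e h ->
  stepfun e (mask e (fun s => if s < a then g s else if s < b then h s else f s)).
Proof.
move=> [_ [Bf Hf]] [_ [Bg Hg]] [_ [Bh Hh]]; split; first by move=> s; exact: maskO.
exists ([:: a; b] ++ Bf ++ Bg ++ Bh) => s t s0 st t1 nB.
have [Is It] := I01_of s0 st t1; rewrite !maskI //.
have ea : (s < a) = (t < a).
  have := nB a; rewrite !mem_cat inE eqxx /= => /(_ isT).
  case: (ltP s a); case: (ltP t a) => //= ? ?; lra.
have eb : (s < b) = (t < b).
  have := nB b; rewrite !mem_cat !inE eqxx orbT /= => /(_ isT).
  case: (ltP s b); case: (ltP t b) => //= ? ?; lra.
rewrite ea eb (Hf s t) ?(Hg s t) ?(Hh s t) // => c cB; apply: nB;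
  rewrite !mem_cat cB ?orbT //.
Qed.

Lemma step_const x : stepfun e (mask e (fun _ => x)).
Proof.
split; first by move=> s; exact: maskO.
exists [::] => s t s0 st t1 _; have [Is It] := I01_of s0 st t1; rewrite !maskI //.
Qed.

Lemma gap (B : seq RR) s : s < 1 -> exists d, [/\ 0 < d, s + d <= 1 &
  forall b, b \in B -> ~~ ((s < b) && (b < s + d))].
Proof.
move=> s1; elim: B => [|b B [d [d0 sd nB]]].
  by exists (1 - s); split => //; lra.
case: (ltP s b) => sb.
  exists (Num.min d (b - s)); split.
  - by rewrite lt_min d0 /=; lra.
  - have : Num.min d (b - s) <= d by rewrite ge_min lexx.
    lra.
  - move=> c; rewrite inE => /orP [/eqP ->|cB].
      apply/negP => /andP [_]; have : Num.min d (b - s) <= b - s by rewrite ge_min lexx orbT.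
      lra.
    apply/negP => /andP [sc cd]; have := nB c cB; rewrite sc /=; apply/negP/negPn.
    have : Num.min d (b - s) <= d by rewrite ge_min lexx.
    lra.
exists d; split => // c; rewrite inE => /orP [/eqP ->|cB]; last exact: nB.
by apply/negP => /andP [? _]; lra.
Qed.

Lemma window f s : stepfun e f -> I01 s -> exists d, [/\ 0 < d, s + d <= 1 &
  forall t, s <= t -> t < s + d -> f t = f s].
Proof.
move=> [_ [B HB]] /andP [s0 s1]; have [d [d0 sd nB]] := gap B s1.
exists d; split => // t st td; symmetry; apply: HB => //; first lra.
move=> b /nB; apply: contra => /andP [sb bt]; rewrite sb /=; lra.
Qed.

Lemma lastbreak (B : seq RR) s : 0 <= s -> exists c, [/\ 0 <= c, c <= s, c \in 0 :: B &
   forall b, b \in B -> ~~ ((c < b) && (b <= s))].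
Proof.
move=> s0; elim: B => [|b B [c [c0 cs cB nB]]].
  by exists 0; split => //; rewrite inE eqxx.
case: (boolP ((c < b) && (b <= s))) => /andP.
  move=> [cb bs]; exists b; split => //; first lra.
    by rewrite !inE eqxx orbT.
  move=> d; rewrite inE => /orP [/eqP ->|dB]; first by rewrite ltxx.
  have := nB d dB; apply: contra => /andP [bd ds]; apply/andP; split => //; lra.
move=> ncb; exists c; split => //.
  by move: cB; rewrite !inE => /orP [->|->]; rewrite ?orbT.
move=> d; rewrite inE => /orP [/eqP ->|dB]; last exact: nB.
by apply/negP => /andP [? ?]; apply: ncb.
Qed.

Lemma vals f : stepfun e f -> exists l : seq G, forall s, I01 s -> f s \in l.
Proof.
move=> [fo [B HB]]; exists (map f (0 :: B)) => s /andP [s0 s1].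
have [c [c0 cs cB nB]] := lastbreak B s0.
rewrite -(HB c s) //; exact: map_f.
Qed.

End StepLemmas.

Definition In01 : set RR := [set s | I01 s].
Lemma lam_ab (a b : RR) : a <= b -> lam [set s | a <= s /\ s < b] = (b - a)%:E.
Proof.
move=> ab.
have -> : [set s | a <= s /\ s < b] = [set` `[a, b[%R] .
  by apply/seteqP; split => s /=; rewrite in_itv /=; [move=> [-> ->]|move/andP].
rewrite /lam lebesgue_measure_itv /= lte_fin.
case: ltP => ab' ; first by rewrite -EFinD.
have -> : b = a by apply/eqP; rewrite eq_le ab' ab.
by rewrite subrr.
Qed.

Lemma lam_fin (A : set RR) : A `<=` In01 -> lam A = (fine (lam A))%:E.
Proof.
move=> AI; rewrite fineK // ge0_fin_numE ?lam_ge0 //.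
apply: (le_lt_trans (lam_le (B := [set s | 0 <= s /\ s < 1]) _)).
  by move=> s /AI /andP [].
by rewrite lam_ab // subr0 ltry.
Qed.
Definition len (A : set RR) : RR := fine (lam A).
Lemma len_ge0 A : A `<=` In01 -> 0 <= len A.
Proof. move=> AI; have := lam_ge0 A; rewrite (lam_fin AI) lee_fin; by []. Qed.
Lemma len_le A B : B `<=` In01 -> A `<=` B -> len A <= len B.
Proof.
move=> BI AB; have AI : A `<=` In01 by move=> s /AB /BI.
have := lam_le AB; rewrite (lam_fin AI) (lam_fin BI) lee_fin; by [].
Qed.
Lemma len_U A B : A `<=` In01 -> B `<=` In01 -> len (A `|` B) <= len A + len B.
Proof.
move=> AI BI; have ABI : A `|` B `<=` In01 by move=> s [/AI|/BI].
have := lam_U A B; rewrite (lam_fin AI) (lam_fin BI) (lam_fin ABI) -EFinD lee_fin; by [].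
Qed.
Lemma len_ab a b : a <= b -> len [set s | a <= s /\ s < b] = b - a.
Proof. by move=> ab; rewrite /len lam_ab. Qed.
Lemma len0 : len set0 = 0.
Proof. by rewrite /len /lam measure0. Qed.

Section NbLemmas.
Context (G : topologicalType) (e : G).
Implicit Types f g h : Hc G e.

Lemma bad01 (f g : RR -> G) U : bad f g U `<=` In01. Proof. by move=> s []. Qed.
Lemma NbE f U eps g : Nb f U eps g = (len (bad (sval f) (sval g) U) < eps).
Proof. by rewrite /Nb /= (lam_fin (@bad01 _ _ _)) lte_fin. Qed.

Lemma len_bad0 (f : RR -> G) U : goodU U -> len (bad f f U) = 0.
Proof.
move=> gU; have -> : bad f f U = set0.
  by apply/seteqP; split => s // [_]; have [_ ?] := gU (f s).
exact: len0.
Qed.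

Lemma Nb_self f U eps : goodU U -> 0 < eps -> Nb f U eps f.
Proof. by move=> gU ep; rewrite NbE len_bad0. Qed.

Lemma fin_inter (U : G -> set G) (l : seq G) y : goodU U ->
  open [set z | forall x, x \in l -> U x y -> U x z].
Proof.
move=> gU; elim: l => [|x l IH].
  have -> : [set z | forall x : G, x \in [::] -> U x y -> U x z] = setT.
    by apply/seteqP; split => z //.
  exact: openT.
case: (pselect (U x y)) => Uxy.
  have -> : [set z | forall x0, x0 \in x :: l -> U x0 y -> U x0 z] =
    U x `&` [set z | forall x, x \in l -> U x y -> U x z].
    apply/seteqP; split => z /=.
      by move=> H; split; [apply: H => //; rewrite inE eqxx|move=> x0 x0l; apply: H; rewrite inE x0l orbT].
    move=> [Uz H] x0; rewrite inE => /orP [/eqP ->|]//; exact: H.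
  by apply: openI => //; have [] := gU x.
have -> : [set z | forall x0, x0 \in x :: l -> U x0 y -> U x0 z] =
   [set z | forall x, x \in l -> U x y -> U x z].
  apply/seteqP; split => z /=.
    by move=> H x0 x0l; apply: H; rewrite inE x0l orbT.
  by move=> H x0; rewrite inE => /orP [/eqP ->|] //; exact: H.
exact: IH.
Qed.

Lemma Nb_open f U eps : goodU U -> opn (Nb f U eps).
Proof.
move=> gU g Ng; have [l Hl] := vals (proj2_sig f).
pose W := fun y => [set z | forall x, x \in l -> U x y -> U x z].
exists W, (eps - len (bad (sval f) (sval g) U)); split.
- by move=> y; split; [exact: fin_inter | by move=> x _].
- by rewrite NbE in Ng; rewrite subr_gt0.
- move=> h; rewrite !NbE => Nh.
  have := len_U (@bad01 (sval f) (sval g) U) (@bad01 (sval g) (sval h) W).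
  have : len (bad (sval f) (sval h) U) <=
     len (bad (sval f) (sval g) U `|` bad (sval g) (sval h) W).
    apply: len_le; first by move=> s [] [].
    move=> s [Is nU]; case: (pselect (U (sval f s) (sval g s))) => Ug; last by left.
    right; split => // WW; apply: nU; apply: WW => //; exact: Hl.
  lra.
Qed.

Lemma nbhsN f U eps : goodU U -> 0 < eps -> nbhs f (Nb f U eps).
Proof.
move=> gU ep; rewrite nbhsHE; exists (Nb f U eps); split => //;
  [exact: Nb_open | exact: Nb_self].
Qed.

Lemma nbhs_basic f A : nbhs f A -> exists U eps, [/\ goodU U, 0 < eps & Nb f U eps `<=` A].
Proof.
rewrite nbhsHE => -[B [oB Bf BA]]; have [U [eps [g p s]]] := oB f Bf.
by exists U, eps; split => // h /s; exact: BA.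
Qed.

Lemma Hext f g : (forall s, I01 s -> sval f s = sval g s) -> f = g.
Proof.
move: f g => [f pf] [g pg] /= E.
have fg : f = g.
  apply: funext => s; case: (boolP (I01 s)) => Is; first exact: E.
  by rewrite (proj1 pf s Is) (proj1 pg s Is).
subst g; congr exist; exact: Prop_irrelevance.
Qed.

End NbLemmas.

Section Gyro.
Context (G : topologicalType) (op : G -> G -> G) (gyr : G -> G -> G -> G)
  (e : G) (inv : G -> G) (pre : G -> G -> G -> G).
Hypothesis eL : forall a, op e a = a.
Hypothesis eR : forall a, op a e = a.
Hypothesis invL : forall x, op (inv x) x = e.
Hypothesis invR : forall x, op x (inv x) = e.
Hypothesis gyr_inj : forall x y z w, gyr x y z = gyr x y w -> z = w.
Hypothesis gyr_pre : forall x y w, gyr x y (pre x y w) = w.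
Hypothesis gyr_hom : forall x y z w, gyr x y (op z w) = op (gyr x y z) (gyr x y w).
Hypothesis gassoc : forall x y z, op x (op y z) = op (op x y) (gyr x y z).
Hypothesis gloop : forall x y z, gyr (op x y) y z = gyr x y z.

Lemma lcan a b c : op a b = op a c -> b = c.
Proof.
move=> E; apply: (@gyr_inj (inv a) a).
have : op (inv a) (op a b) = op (inv a) (op a c) by rewrite E.
by rewrite !gassoc invL !eL.
Qed.

Definition HH := Hc G e.
Definition Hop (f g : HH) : HH :=
  exist _ _ (step_comb3 (fun a b _ => op a b) (proj2_sig f) (proj2_sig g) (proj2_sig f)).
Definition Hinv (f : HH) : HH :=
  exist _ _ (step_comb3 (fun a _ _ => inv a) (proj2_sig f) (proj2_sig f) (proj2_sig f)).
Definition Hgyr (f g h : HH) : HH :=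
  exist _ _ (step_comb3 gyr (proj2_sig f) (proj2_sig g) (proj2_sig h)).
Definition Hpre (f g h : HH) : HH :=
  exist _ _ (step_comb3 pre (proj2_sig f) (proj2_sig g) (proj2_sig h)).
Definition phi (x : G) : HH := exist _ _ (step_const e x).
Definition eH := phi e.

Lemma sv_op f g s : I01 s -> sval (Hop f g) s = op (sval f s) (sval g s).
Proof. exact: maskI. Qed.
Lemma sv_inv f s : I01 s -> sval (Hinv f) s = inv (sval f s).
Proof. exact: maskI. Qed.
Lemma sv_gyr f g h s : I01 s -> sval (Hgyr f g h) s = gyr (sval f s) (sval g s) (sval h s).
Proof. exact: maskI. Qed.
Lemma sv_pre f g h s : I01 s -> sval (Hpre f g h) s = pre (sval f s) (sval g s) (sval h s).
Proof. exact: maskI. Qed.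
Lemma sv_phi x s : I01 s -> sval (phi x) s = x.
Proof. exact: maskI. Qed.

Lemma gyro_S (S : set HH) : S eH ->
  (forall a b, S a -> S b -> S (Hop a b)) ->
  (forall a, S a -> S (Hinv a)) ->
  (forall a b c, S a -> S b -> S c -> S (Hgyr a b c)) ->
  (forall a b c, S a -> S b -> S c -> S (Hpre a b c)) ->
  gyrogroup_on Hop Hgyr S.
Proof.
move=> Se Sop Sinv Sgyr Spre; split => //.
have eHL : forall a, Hop eH a = a.
  by move=> a; apply: Hext => s Is; rewrite sv_op // sv_phi // eL.
have eHR : forall a, Hop a eH = a.
  by move=> a; apply: Hext => s Is; rewrite sv_op // sv_phi // eR.
exists eH => //; split.
- split; first by move=> a _; split.
  move=> e' Se' He'; have [h _] := He' eH Se; by rewrite -(eHR e') h.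
- move=> x Sx; exists (Hinv x); first exact: Sinv.
  split.
  + by apply: Hext => s Is; rewrite sv_op // sv_inv // sv_phi // invL.
  + by apply: Hext => s Is; rewrite sv_op // sv_inv // sv_phi // invR.
  + move=> y' _ _ E; apply: Hext => s Is; rewrite sv_inv //; apply: (@lcan (sval x s)).
    by rewrite invR -sv_op // E sv_phi.
- move=> x y Sx Sy; split.
  + by move=> z Sz; apply: Sgyr.
  + move=> z w _ _ E; apply: Hext => s Is; apply: (@gyr_inj (sval x s) (sval y s)).
    by rewrite -!sv_gyr // E.
  + move=> w Sw; exists (Hpre x y w); first exact: Spre.
    by apply: Hext => s Is; rewrite sv_gyr // sv_pre // gyr_pre.
  + by move=> z w _ _; apply: Hext => s Is; rewrite sv_gyr // !sv_op // !sv_gyr // gyr_hom.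
- by move=> x y z _ _ _; apply: Hext => s Is; rewrite !sv_op // sv_gyr // gassoc.
- by move=> x y z _ _ _; apply: Hext => s Is; rewrite !sv_gyr // sv_op // gloop.
Qed.

Lemma Hgyrogroup : gyrogroup Hop Hgyr.
Proof. by apply: gyro_S. Qed.

Lemma phi_hom : groupoid_hom op Hop phi.
Proof. by move=> x y; apply: Hext => s Is; rewrite sv_op // !sv_phi. Qed.

Lemma phi_inj : injective phi.
Proof.
move=> x y E; have := congr1 (fun k : HH => sval k 0) E.
by rewrite !sv_phi //= /I01 lexx ltr01.
Qed.

Lemma range_sub : subgyrogroup Hop Hgyr (range phi).
Proof.
split; first by exists (phi e), e.
apply: gyro_S; first by exists e.
- by move=> _ _ [a _ <-] [b _ <-]; exists (op a b) => //; rewrite phi_hom.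
- move=> _ [a _ <-]; exists (inv a) => //.
  by apply: Hext => s Is; rewrite sv_inv // !sv_phi.
- move=> _ _ _ [a _ <-] [b _ <-] [c _ <-]; exists (gyr a b c) => //.
  by apply: Hext => s Is; rewrite sv_gyr // !sv_phi.
- move=> _ _ _ [a _ <-] [b _ <-] [c _ <-]; exists (pre a b c) => //.
  by apply: Hext => s Is; rewrite sv_pre // !sv_phi.
Qed.

End Gyro.

Lemma len_le_ab (A : set RR) u v : A `<=` In01 -> A `<=` [set s | u <= s /\ s < v] -> u <= v ->
  len A <= v - u.
Proof.
move=> AI Auv uv; have := lam_le Auv; rewrite lam_ab // (lam_fin AI) lee_fin; by [].
Qed.

Lemma len_ge_ab (A : set RR) u v : A `<=` In01 -> [set s | u <= s /\ s < v] `<=` A -> u <= v ->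
  v - u <= len A.
Proof.
move=> AI Auv uv; have := lam_le Auv; rewrite lam_ab // (lam_fin AI) lee_fin; by [].
Qed.

Section TopoH.
Context (G : topologicalType) (e : G).
Local Notation HH := (Hc G e).
Local Notation phi := (@phi G e).

Lemma wind2 (f g : HH) s : I01 s -> exists d, [/\ 0 < d, s + d <= 1 &
  forall t, s <= t -> t < s + d -> sval f t = sval f s /\ sval g t = sval g s].
Proof.
move=> Is; have [d1 [d10 sd1 H1]] := window (proj2_sig f) Is.
have [d2 [d20 sd2 H2]] := window (proj2_sig g) Is.
have m1 : Num.min d1 d2 <= d1 by rewrite ge_min lexx.
have m2 : Num.min d1 d2 <= d2 by rewrite ge_min lexx orbT.
exists (Num.min d1 d2); split; first by rewrite lt_min d10.
  lra.
move=> t st td; split; [apply: H1|apply: H2] => //; lra.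
Qed.

Lemma I01_win s d t : I01 s -> s + d <= 1 -> s <= t -> t < s + d -> I01 t.
Proof. move=> /andP [s0 s1] sd st td; rewrite /I01; apply/andP; split; lra. Qed.

Lemma H_T1 : accessible_space G -> accessible_space HH.
Proof.
move=> T1G f g fg.
have [s [Is fs]] : exists s, I01 s /\ sval f s <> sval g s.
  apply: contrapT => H; move/eqP: fg; apply; apply: Hext => s Is.
  by apply: contrapT => H2; apply: H; exists s.
have [d [d0 sd Hw]] := wind2 f g Is.
have fsg : sval f s != sval g s by apply/eqP.
have [V0 [oO Of Og]] := T1G _ _ fsg.
pose U := fun z => if z == sval f s then V0 else setT.
have gU : goodU U.
  move=> z; rewrite /U; case: eqP => [->|_]; split => //; first by rewrite -inE.
  exact: openT.
exists (Nb f U d); split.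
- exact: Nb_open.
- by rewrite inE; exact: Nb_self.
- rewrite inE /= NbE; apply/negP; rewrite -leNgt.
  have -> : d = (s + d) - s by lra.
  apply: len_ge_ab; [exact: bad01| |lra].
  move=> t [st td]; have [ft gt] := Hw t st td; split; first exact: (I01_win Is sd).
  rewrite ft gt /U eqxx; move: Og; rewrite inE => Og Og'; exact: Og.
Qed.

Lemma phi_cont : continuous phi.
Proof.
move=> x A /nbhs_basic [U [eps [gU ep sN]]].
have [oU Ux] := gU x.
rewrite /= nbhsE; exists (U x); first by rewrite open_nbhsE; split => //; exact: open_nbhs_nbhs.
move=> z Uz; apply: sN; rewrite NbE.
have -> : bad (sval (phi x)) (sval (phi z)) U = set0.
  by apply/seteqP; split => s // [Is]; rewrite !sv_phi.
by rewrite len0.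
Qed.

Lemma phi_open (O : set G) : open O -> exists V : set HH, open V /\ phi @` O = range phi `&` V.
Proof.
move=> oO.
pose Bs := fun h : HH => [set s | I01 s /\ ~ O (sval h s)].
have Bs01 h : Bs h `<=` In01 by move=> s [].
exists [set h | len (Bs h) < 1]; split.
  rewrite openHE => h Vh.
  pose U := fun z => if `[< O z >] then O else setT.
  have gU : goodU U.
    move=> z; rewrite /U; case: asboolP => Oz; split => //; exact: openT.
  exists U, (1 - len (Bs h)); split => //; first by rewrite subr_gt0.
  move=> k; rewrite NbE /= => Nk.
  have : len (Bs k) <= len (Bs h `|` bad (sval h) (sval k) U).
    apply: len_le; first by move=> s [/Bs01|/bad01].
    move=> s [Is nO]; case: (pselect (O (sval h s))) => Oh; last by left.
    right; split => //; rewrite /U; case: asboolP => // _.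
  have := len_U (Bs01 h) (@bad01 G (sval h) (sval k) U).
  lra.
apply/seteqP; split.
  move=> _ [x Ox <-]; split; first by exists x.
  change (len (Bs (phi x)) < 1).
  have -> : Bs (phi x) = set0.
    by apply/seteqP; split => s // [Is]; rewrite sv_phi.
  by rewrite /= len0 ltr01.
move=> _ [[x _ <-]] /=; case: (pselect (O x)) => Ox; first by exists x.
change (len (Bs (phi x)) < 1 -> (phi @` O) (phi x)).
have -> : Bs (phi x) = [set s | 0 <= s /\ s < 1].
  apply/seteqP; split => s /=.
    by move=> [/andP [? ?]].
  move=> [s0 s1]; have Is : I01 s by apply/andP.
  by split => //; rewrite sv_phi.
by rewrite len_ab ?ler01 // subr0 ltxx.
Qed.

Lemma phi_closed : (forall x y : G, x != y -> exists O1 O2, [/\ open O1, open O2, O1 x, O2 y &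
     forall z, O1 z -> O2 z -> False]) -> closed (range phi).
Proof.
move=> hsep; rewrite -[range phi]setCK; apply: open_closedC; rewrite openHE => h nh.
have [s1 [s2 [I1 I2 d12]]] : exists s1 s2, [/\ I01 s1, I01 s2 & sval h s1 <> sval h s2].
  apply: contrapT => H; apply: nh; exists (sval h 0) => //.
  apply: (@Hext G e) => s Is; rewrite sv_phi //; apply: contrapT => H2; apply: H.
  by exists 0, s; split => //; rewrite /I01 lexx ltr01.
have [d1 [d10 sd1 H1]] := wind2 h h I1.
have [d2 [d20 sd2 H2]] := wind2 h h I2.
have h12 : sval h s1 != sval h s2 by apply/eqP.
have [V1 [V2 [oO1 oO2 O1h O2h dO]]] := hsep _ _ h12.
pose U := fun z => if z == sval h s1 then V1 else if z == sval h s2 then V2 else setT.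
have gU : goodU U.
  move=> z; rewrite /U; case: eqP => [->|_]; first by split.
  case: eqP => [->|_]; first by split.
  split => //; exact: openT.
have m1 : Num.min d1 d2 <= d1 by rewrite ge_min lexx.
have m2 : Num.min d1 d2 <= d2 by rewrite ge_min lexx orbT.
exists U, (Num.min d1 d2); split => //; first by rewrite lt_min d10.
move=> k + [c _ ck]; rewrite -ck NbE => N.
have c1 : V1 c.
  apply: contrapT => nc; move: N; apply/negP; rewrite -leNgt.
  apply: (le_trans m1); have -> : d1 = (s1 + d1) - s1 by lra.
  apply: len_ge_ab; [exact: bad01| |lra].
  move=> t [st td]; have [ft _] := H1 t st td; split; first exact: (I01_win I1 sd1).
  by rewrite ft sv_phi ?(I01_win I1 sd1) // /U eqxx.
have c2 : V2 c.
  apply: contrapT => nc; move: N; apply/negP; rewrite -leNgt.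
  apply: (le_trans m2); have -> : d2 = (s2 + d2) - s2 by lra.
  apply: len_ge_ab; [exact: bad01| |lra].
  move=> t [st td]; have [ft _] := H2 t st td; split; first exact: (I01_win I2 sd2).
  rewrite ft sv_phi ?(I01_win I2 sd2) // /U.
  have /negbTE -> : sval h s2 != sval h s1 by apply/eqP => E; apply: d12.
  by rewrite eqxx.
exact: (dO c).
Qed.

End TopoH.

Definition aa (t : RR) : RR := Num.max 0 (2 * t - 1).
Definition bb (t : RR) : RR := Num.min 1 (2 * t).

Lemma aa_le t : t <= 1/2 -> aa t = 0.
Proof. move=> h; rewrite /aa max_l //; lra. Qed.
Lemma aa_ge t : 1/2 <= t -> aa t = 2 * t - 1.
Proof. move=> h; rewrite /aa max_r //; lra. Qed.
Lemma bb_le t : t <= 1/2 -> bb t = 2 * t.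
Proof. move=> h; rewrite /bb min_r //; lra. Qed.
Lemma bb_ge t : 1/2 <= t -> bb t = 1.
Proof. move=> h; rewrite /bb min_l //; lra. Qed.

Lemma aa_lip t t0 d : t - t0 <= d -> t0 - t <= d -> aa t - aa t0 <= 2 * d /\ aa t0 - aa t <= 2 * d.
Proof.
move=> h1 h2; case: (lerP t (1/2)) => ht; case: (lerP t0 (1/2)) => ht0;
 rewrite ?(aa_le ht) ?(aa_le ht0) ?(aa_ge (ltW ht)) ?(aa_ge (ltW ht0)); split; lra.
Qed.
Lemma bb_lip t t0 d : t - t0 <= d -> t0 - t <= d -> bb t - bb t0 <= 2 * d /\ bb t0 - bb t <= 2 * d.
Proof.
move=> h1 h2; case: (lerP t (1/2)) => ht; case: (lerP t0 (1/2)) => ht0;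
 rewrite ?(bb_le ht) ?(bb_le ht0) ?(bb_ge (ltW ht)) ?(bb_ge (ltW ht0)); split; lra.
Qed.

Lemma aa_gen t : t = 0 -> aa t = 0. Proof. move=> ->; apply: aa_le; lra. Qed.
Lemma bb_gen t : t = 0 -> bb t = 0. Proof. move=> ->; rewrite bb_le; lra. Qed.
Lemma aa_gen1 t : t = 1 -> aa t = 1. Proof. move=> ->; rewrite aa_ge; lra. Qed.
Lemma aa0 : aa 0 = 0. Proof. exact: aa_gen. Qed.
Lemma bb0 : bb 0 = 0. Proof. exact: bb_gen. Qed.
Lemma aa1 : aa 1 = 1. Proof. exact: aa_gen1. Qed.

Definition Dset (u v : RR) := [set s | I01 s /\ (s < u) != (s < v)].
Lemma lenD u v w : u - v <= w -> v - u <= w -> len (Dset u v) <= w.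
Proof.
move=> h1 h2; have DI : Dset u v `<=` In01 by move=> s [].
case: (lerP u v) => uv.
  apply: le_trans (len_le_ab DI _ uv) _; last lra.
  move=> s [_]; case: (ltP s u); case: (ltP s v) => //= a b _; lra.
apply: le_trans (len_le_ab DI _ (ltW uv)) _; last lra.
move=> s [_]; case: (ltP s u); case: (ltP s v) => //= a b _; lra.
Qed.

Section Paths.
Context (G : topologicalType) (e : G).
Local Notation HH := (Hc G e).

Definition qpath (g m f : HH) (t : RR) : HH :=
  exist _ _ (step_piece (aa t) (bb t) (proj2_sig f) (proj2_sig g) (proj2_sig m)).

Lemma sv_q g m f t s : I01 s -> sval (qpath g m f t) s =
  if s < aa t then sval g s else if s < bb t then sval m s else sval f s.
Proof. exact: maskI. Qed.

Lemma q0 g m f : qpath g m f 0 = f.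
Proof.
apply: Hext => s Is; rewrite sv_q //; move: (Is) => /andP [s0 _].
rewrite aa0 bb0 ltNge s0 /=; by [].
Qed.

Lemma q1 g m f : qpath g m f 1 = g.
Proof.
apply: Hext => s Is; rewrite sv_q // aa1.
by move: Is => /andP [_ ->].
Qed.

Lemma q_cont g m f : continuous (qpath g m f).
Proof.
move=> t0 A /nbhs_basic [U [eps [gU ep sN]]].
have e5 : 0 < eps / 5 by lra.
apply: (filterS (P := ball t0 (eps / 5))); last exact: nbhsx_ballx.
move=> t; rewrite /ball /= ltr_norml => /andP [h1 h2].
apply: sN; rewrite NbE.
have := @aa_lip t t0 (eps / 5); have := @bb_lip t t0 (eps / 5).
move=> /(_ ltac:(lra) ltac:(lra)) [b1 b2] /(_ ltac:(lra) ltac:(lra)) [a1 a2].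
have := @lenD (aa t0) (aa t) (2 * (eps / 5)); have := @lenD (bb t0) (bb t) (2 * (eps / 5)).
move=> /(_ ltac:(lra) ltac:(lra)) Lb /(_ ltac:(lra) ltac:(lra)) La.
have DI u v : Dset u v `<=` In01 by move=> s [].
have := len_U (DI (aa t0) (aa t)) (DI (bb t0) (bb t)).
have : len (bad (sval (qpath g m f t0)) (sval (qpath g m f t)) U) <=
       len (Dset (aa t0) (aa t) `|` Dset (bb t0) (bb t)).
  apply: len_le; first by move=> s [/DI|/DI].
  move=> s [Is nU]; rewrite !sv_q // in nU.
  case: (boolP ((s < aa t0) != (s < aa t))) => da; first by left.
  case: (boolP ((s < bb t0) != (s < bb t))) => db; first by right.
  move: da db; rewrite !negbK => /eqP ea /eqP eb; exfalso; apply: nU.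
  rewrite ea eb; exact: (proj2 (gU _)).
lra.
Qed.

Lemma q_path g m f : [/\ {within `[0%R, 1%R], continuous (qpath g m f)},
   qpath g m f 0 = f & qpath g m f 1 = g].
Proof. split; [apply: continuous_subspaceT; exact: q_cont|exact: q0|exact: q1]. Qed.

Lemma q_in x g h U eps : goodU U -> Nb x U eps g -> Nb x U eps h ->
  forall t, Nb x U eps (qpath h x g t).
Proof.
move=> gU; rewrite !NbE => Ng Nh t; rewrite NbE.
case: (lerP t (1/2)) => ht.
  apply: le_lt_trans Ng; apply: len_le; first exact: bad01.
  move=> s [Is nU]; split => //; move: nU; rewrite sv_q // aa_le // ltNge.
  move: (Is) => /andP [-> _] /=; case: ifP => // _ nU; exfalso; apply: nU; exact: (proj2 (gU _)).
apply: le_lt_trans Nh; apply: len_le; first exact: bad01.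
move=> s [Is nU]; split => //; move: nU; rewrite sv_q // bb_ge ?(ltW ht) //.
move: (Is) => /andP [_ ->] /=; case: ifP => // _ nU; exfalso; apply: nU; exact: (proj2 (gU _)).
Qed.

Lemma H_pc : path_connected_space HH.
Proof.
move=> x y _ _; exists (qpath y x x); have [c h0 h1] := q_path y x x; split => //.
Qed.

Lemma H_lpc : locally_path_connected HH.
Proof.
move=> x A /nbhs_basic [U [eps [gU ep sN]]].
exists (Nb x U eps); split => //; first by rewrite openHE; exact: Nb_open.
  exact: Nb_self.
move=> g h Ng Nh; exists (qpath h x g); have [c h0 h1] := q_path h x g; split => //.
by move=> _ [t _ <-]; exact: q_in.
Qed.

End Paths.

Lemma prod_nbhsE (T S : topologicalType) (x : T) (y : S) (A : set (T * S)) :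
  nbhs (x, y) A -> exists P Q, [/\ nbhs x P, nbhs y Q & P `*` Q `<=` A].
Proof. by case => [[P Q] /= [Px Qy] PQ]; exists P, Q. Qed.
Lemma prod_nbhsI (T S : topologicalType) (x : T) (y : S) (A : set (T * S)) P Q :
  nbhs x P -> nbhs y Q -> P `*` Q `<=` A -> nbhs (x, y) A.
Proof. by move=> Px Qy PQ; exists (P, Q). Qed.

Lemma open_sub (T : topologicalType) (x : T) P : nbhs x P -> exists P', [/\ open P', P' x & P' `<=` P].
Proof. by rewrite nbhsE => -[B]; rewrite open_nbhsE => -[oB /nbhs_singleton Bx] BP; exists B. Qed.

Lemma fin_inter2 (T : topologicalType) (I : eqType) (V : I -> set T) (l : seq I) :
  (forall y, open (V y)) -> open [set z | forall y, y \in l -> V y z].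
Proof.
move=> oV; elim: l => [|x l IH].
  have -> : [set z | forall y : I, y \in [::] -> V y z] = setT by apply/seteqP; split => z //.
  exact: openT.
have -> : [set z | forall y, y \in x :: l -> V y z] = V x `&` [set z | forall y, y \in l -> V y z].
  apply/seteqP; split => z /=.
    by move=> H; split; [apply: H; rewrite inE eqxx|move=> y yl; apply: H; rewrite inE yl orbT].
  by move=> [Vz H] y; rewrite inE => /orP [/eqP ->|]//; exact: H.
exact: openI.
Qed.

Section Cont.
Context (G : topologicalType) (op : G -> G -> G) (e : G) (inv : G -> G).
Local Notation HH := (Hc G e).
Hypothesis opC : continuous (fun p : G * G => op p.1 p.2).
Hypothesis invC : continuous inv.

Lemma Hop_cont : continuous (fun p : HH * HH => @Hop G op e p.1 p.2).
Proof.
move=> [f g] A /nbhs_basic [U [eps [gU ep sN]]].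
have key : forall p : G * G, exists PQ : set G * set G, [/\ open PQ.1, open PQ.2, PQ.1 p.1, PQ.2 p.2 &
    forall a b, PQ.1 a -> PQ.2 b -> U (op p.1 p.2) (op a b)].
  move=> [x y]; have [oU Ux] := gU (op x y).
  have : nbhs (op x y) (U (op x y)) by apply: open_nbhs_nbhs; rewrite open_nbhsE; split => //;
    apply: open_nbhs_nbhs; split.
  move=> /(@opC (x, y)) /prod_nbhsE [P [Q [Px Qy PQ]]].
  have [P' [oP P'x P'P]] := open_sub Px; have [Q' [oQ Q'y Q'Q]] := open_sub Qy.
  exists (P', Q'); split => // a b Pa Qb.
  by have := PQ (a, b) (conj (P'P _ Pa) (Q'Q _ Qb)).
have [PQ HPQ] := choice key.
have [lf Hlf] := vals (proj2_sig f); have [lg Hlg] := vals (proj2_sig g).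
pose U1 := fun x => [set z | forall y, y \in lg -> (PQ (x, y)).1 z].
pose U2 := fun y => [set z | forall x, x \in lf -> (PQ (x, y)).2 z].
have gU1 : goodU U1.
  move=> x; split; first by apply: fin_inter2 => y; have [] := HPQ (x, y).
  by move=> y _; have [] := HPQ (x, y).
have gU2 : goodU U2.
  move=> y; split; first by apply: fin_inter2 => x; have [] := HPQ (x, y).
  by move=> x _; have [] := HPQ (x, y).
have e2 : 0 < eps / 2 by lra.
apply: (prod_nbhsI (nbhsN f gU1 e2) (nbhsN g gU2 e2)) => -[f' g'] [/= N1 N2].
apply: sN; rewrite /= NbE; rewrite NbE in N1; rewrite NbE in N2.
have := len_U (@bad01 G (sval f) (sval f') U1) (@bad01 G (sval g) (sval g') U2).
have : len (bad (sval (Hop op f g)) (sval (Hop op f' g')) U) <=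
   len (bad (sval f) (sval f') U1 `|` bad (sval g) (sval g') U2).
  apply: len_le; first by move=> s [/bad01|/bad01].
  move=> s [Is nU]; rewrite !sv_op // in nU.
  case: (pselect (U1 (sval f s) (sval f' s))) => u1; last by left.
  case: (pselect (U2 (sval g s) (sval g' s))) => u2; last by right.
  exfalso; apply: nU; have [_ _ _ _ H] := HPQ (sval f s, sval g s); apply: H.
    by apply: u1; exact: Hlg.
  by apply: u2; exact: Hlf.
lra.
Qed.

Lemma Hinv_cont : continuous (@Hinv G e inv).
Proof.
move=> f A /nbhs_basic [U [eps [gU ep sN]]].
pose U1 := fun x => inv @^-1` U (inv x).
have gU1 : goodU U1.
  move=> x; split; last by have [] := gU (inv x).
  by apply: open_comp; [move=> z _; exact: invC|have [] := gU (inv x)].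
apply: (filterS _ (nbhsN f gU1 ep)) => f' N1; apply: sN; rewrite NbE; rewrite NbE in N1.
apply: le_lt_trans N1; apply: len_le; first exact: bad01.
by move=> s [Is nU]; split => //; rewrite !sv_inv // in nU.
Qed.

End Cont.

Definition PG (G : topologicalType) := prod_topology (fun _ : nat => G).

Lemma tych (G : topologicalType) (C : set G) : compact C -> compact [set c : PG G | forall i, C (c i)].
Proof. move=> cC. exact: (@tychonoff nat (fun _ => G) (fun _ => C)). Qed.
Lemma projN (G : topologicalType) (c : PG G) i U : nbhs (c i) U -> nbhs c [set c' : PG G | U (c' i)].
Proof. move=> h. exact: (@proj_continuous nat (fun _ => G) i c U h). Qed.
Lemma projNn (G : topologicalType) (c : PG G) (P : nat -> G -> Prop) (n : nat) :
  (forall i, nbhs (c i) (P i)) -> nbhs c [set c' : PG G | forall i : nat, (i < n)%N -> P i (c' i)].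
Proof.
move=> HP; elim: n => [|n IH].
  by apply: filterS filterT => c' _ i.
apply: filterS (filterI IH (projN (HP n))) => c' [H1 H2] i; rewrite ltnS leq_eqVlt.
by case/orP => [/eqP ->|/H1].
Qed.

Lemma lenD2 u v w : u - v <= w -> v - u <= w -> len [set s | I01 s /\ (u <= s) != (v <= s)] <= w.
Proof.
move=> h1 h2; have DI : [set s | I01 s /\ (u <= s) != (v <= s)] `<=` In01 by move=> s [].
case: (lerP u v) => uv.
  apply: le_trans (len_le_ab DI _ uv) _; last lra.
  move=> s [_]; case: (leP u s); case: (leP v s) => //= a b _; lra.
apply: le_trans (len_le_ab DI _ (ltW uv)) _; last lra.
move=> s [_]; case: (leP u s); case: (leP v s) => //= a b _; lra.
Qed.

Lemma len_bigU (D : nat -> set RR) n w : (forall i, D i `<=` In01) -> (forall i, (i < n)%N -> len (D i) <= w) ->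
  len [set s | exists2 i, (i < n)%N & D i s] <= n%:R * w.
Proof.
move=> DI Hw; elim: n Hw => [|n IH] Hw.
  have -> : [set s | exists2 i, (i < 0)%N & D i s] = set0 by apply/seteqP; split => s // [].
  by rewrite len0 mul0r.
have UI : [set s | exists2 i, (i < n)%N & D i s] `<=` In01 by move=> s [i _ /DI].
have := len_U UI (DI n).
have : len [set s | exists2 i, (i < n.+1)%N & D i s] <=
  len ([set s | exists2 i, (i < n)%N & D i s] `|` D n).
  apply: len_le; first by move=> s [/UI|/DI].
  move=> s [i]; rewrite ltnS leq_eqVlt => /orP [/eqP ->|iln] Di; [by right|by left; exists i].
have := IH (fun i ilt => Hw i (ltnW ilt)); have := Hw n (ltnSn n).
rewrite -natr1 mulrDl mul1r; lra.
Qed.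

Section SC.
Context (G : topologicalType) (e : G).
Local Notation HH := (Hc G e).

Fixpoint layer (n : nat) (c : nat -> G) (r : nat -> RR) (s : RR) : G :=
  if n is k.+1 then (if r k <= s then c k else layer k c r s) else e.

Lemma layer_rel (R : G -> G -> Prop) n c r c' r' s t : R e e ->
  (forall i, (i < n)%N -> (r i <= s) = (r' i <= t)) ->
  (forall i, (i < n)%N -> R (c i) (c' i)) -> R (layer n c r s) (layer n c' r' t).
Proof.
move=> Ree; elim: n => [|n IH] Hr Hc //=.
rewrite Hr //; case: ifP => _; first exact: Hc.
by apply: IH => i ilt; [apply: Hr|apply: Hc]; rewrite ltnS ltnW.
Qed.

Lemma layer_step n c r : stepfun e (mask e (layer n c r)).
Proof.
split; first by move=> s; exact: maskO.
exists (map r (iota 0 n)) => s t s0 st t1 nB.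
have [Is It] := I01_of s0 st t1; rewrite !maskI //.
apply: (@layer_rel eq) => // i ilt.
have : r i \in map r (iota 0 n) by apply: map_f; rewrite mem_iota add0n ilt.
move=> /nB; case: (leP (r i) s) => ris; case: (leP (r i) t) => rit //=; lra.
Qed.

Definition Phi n (p : PG G * PG RR) : HH := exist _ _ (layer_step n p.1 p.2).

Lemma Phi_cont n : continuous (Phi n).
Proof.
move=> [c r] A /nbhs_basic [U [eps [gU ep sN]]].
pose w := eps / (n%:R + 1).
have n1 : 0 < n%:R + 1 :> RR by rewrite ltr_wpDl // ler0n.
have w0 : 0 < w by rewrite divr_gt0.
have ww : w * (n%:R + 1) = eps by rewrite divfK // gt_eqF.
have nwe : n%:R * w < eps by move: ww; rewrite mulrDr mulr1 => ww; lra.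
apply: (@prod_nbhsI _ _ _ _ _ [set c' : PG G | forall i : nat, (i < n)%N -> U (c i) (c' i)]
   [set r' : PG RR | forall i : nat, (i < n)%N -> ball (r i) w (r' i)]).
- by apply: (@projNn _ c (fun i => U (c i))) => i; apply: open_nbhs_nbhs; split; have [] := gU (c i).
- by apply: (@projNn _ r (fun i => ball (r i) w)) => i; exact: nbhsx_ballx.
- move=> [c' r'] [/= Hc Hr]; apply: sN; rewrite NbE.
  pose D i := [set s | I01 s /\ (r i <= s) != (r' i <= s)].
  have DI i : D i `<=` In01 by move=> s [].
  have : len (bad (sval (Phi n (c, r))) (sval (Phi n (c', r'))) U) <=
      len [set s | exists2 i, (i < n)%N & D i s].
    apply: len_le; first by move=> s [i _ []].
    move=> s [Is nU]; apply: contrapT => nD; apply: nU; rewrite /= !maskI //.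
    apply: (@layer_rel U) => //; first exact: (proj2 (gU e)).
    move=> i ilt; apply/eqP; apply: contrapT => ne; apply: nD; exists i => //; split => //.
    by apply/negP.
  have := @len_bigU D n w DI.
  have Hw : forall i, (i < n)%N -> len (D i) <= w.
    move=> i ilt; have := Hr i ilt; rewrite /ball /= ltr_norml => /andP [h1 h2].
    apply: lenD2; lra.
  move=> /(_ Hw); lra.
Qed.
End SC.

Section SC2.
Context (G : topologicalType) (e : G) (K : nat -> set G).
Hypothesis Kc : forall n, compact (K n).
Hypothesis Kcov : \bigcup_n K n = setT.
Local Notation HH := (Hc G e).

Fixpoint Cs n := if n is m.+1 then Cs m `|` K m.+1 else K 0.
Lemma Cs_compact n : compact (Cs n).
Proof. by elim: n => [|n IH] /=; [exact: Kc|exact: compactU]. Qed.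
Lemma Cs_mono m n : (m <= n)%N -> Cs m `<=` Cs n.
Proof.
elim: n => [|n IH]; first by rewrite leqn0 => /eqP ->.
rewrite leq_eqVlt => /orP [/eqP ->//|]; rewrite ltnS => /IH mn x /mn Cx; by left.
Qed.
Lemma K_Cs k : K k `<=` Cs k.
Proof. by case: k => [|k] x //= Kx; right. Qed.

Lemma vals_bound (l : seq G) : exists m, forall x, x \in l -> Cs m x.
Proof.
elim: l => [|x l [m Hm]]; first by exists 0%N.
have : setT x by [].
rewrite -Kcov => -[k _ Kx].
exists (maxn m k) => y; rewrite inE => /orP [/eqP ->|/Hm].
  by apply: (Cs_mono (leq_maxr m k)); exact: K_Cs.
exact: (Cs_mono (leq_maxl m k)).
Qed.

Definition Dom n := [set c : PG G | forall i, Cs n (c i)] `*`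
   [set r : PG RR | forall i, `[0%R, 1%R]%classic (r i)].

Lemma Dom_compact n : compact (Dom n).
Proof.
apply: compact_setX; apply: tych; first exact: Cs_compact.
exact: segment_compact.
Qed.

Lemma layer_max n (c : nat -> G) (r : nat -> RR) s : (exists i, (i < n)%N /\ r i <= s) ->
  exists j, [/\ (j < n)%N, r j <= s, layer e n c r s = c j &
      forall i, (j < i)%N -> (i < n)%N -> s < r i].
Proof.
elim: n => [|n IH]; first by move=> [i []].
move=> [i [ilt ris]] /=; case: (leP (r n) s) => rn.
  exists n; split => // k nk kn; exfalso; move: nk; rewrite ltnNge -ltnS kn //.
have : exists i, (i < n)%N /\ r i <= s.
  exists i; split => //; move: ilt; rewrite ltnS leq_eqVlt => /orP [/eqP ein|//].
  by exfalso; move: ris; rewrite ein leNgt rn.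
move=> /IH [j [jn rjs lj jm]]; exists j; split => //; first by rewrite ltnW.
move=> k jk; rewrite ltnS leq_eqVlt => /orP [/eqP -> //|kn]; exact: jm.
Qed.

Lemma cover (h : HH) : exists n, (Phi e n @` Dom n) h.
Proof.
have [hout [B HB]] := proj2_sig h.
have [l Hl] := vals (proj2_sig h); have [m Hm] := vals_bound l.
pose B' := sort <=%R (0 :: [seq b <- B | I01 b]).
have B'01 : forall b, b \in B' -> I01 b.
  move=> b; rewrite mem_sort inE => /orP [/eqP ->|]; first by rewrite /I01 lexx ltr01.
  by rewrite mem_filter => /andP [].
have B'sorted : sorted <=%R B' by apply: sort_sorted; exact: le_total.
pose r := fun i => nth 1 B' i.
pose c := fun i => sval h (nth 0 B' i).
pose N := size B'.
have r01 : forall i, `[0%R, 1%R]%classic (r i).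
  move=> i; rewrite /= in_itv /= /r; case: (ltnP i N) => iN.
    by have /andP [a b] := B'01 _ (mem_nth 1 iN); rewrite a ltW.
  by rewrite nth_default // ler01 lexx.
exists (maxn N m); exists (c, r).
  split => i /=; last exact: r01.
  apply: (Cs_mono (leq_maxr N m)); apply: Hm; apply: Hl.
  rewrite /c; case: (ltnP i N) => iN; first exact: B'01 (mem_nth 0 iN).
  by rewrite nth_default // /I01 lexx ltr01.
apply: Hext => s Is; rewrite /= maskI //.
have zB : 0 \in B' by rewrite mem_sort inE eqxx.
have := @layer_max (maxn N m) c r s.
case.
  exists (index 0 B'); split.
    by apply: leq_trans (leq_maxl N m); rewrite index_mem.
  by rewrite /r nth_index //; move: Is => /andP [].
move=> j [jn rjs -> jm].
have jN : (j < N)%N.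
  rewrite ltnNge; apply/negP => Nj; move: rjs; rewrite /r nth_default //.
  by move: Is => /andP [_ s1] s1'; move: s1; rewrite ltNge s1'.
rewrite /c (set_nth_default 1) //.
have Irj := B'01 _ (mem_nth 1 jN).
apply: HB => //; first by move: Irj => /andP [].
  by move: Is => /andP [].
move=> b bB; apply/negP => /andP [rb bs].
have Ib : I01 b by rewrite /I01; move: Irj Is => /andP [r0 _] /andP [_ s1]; apply/andP; split; lra.
have bB' : b \in B' by rewrite mem_sort inE mem_filter Ib bB orbT.
have kN : (index b B' < N)%N by rewrite index_mem.
case: (leqP (index b B') j) => kj.
  have := @sorted_leq_nth _ _ le_trans lexx 1 B' B'sorted (index b B') j.
  rewrite !inE => /(_ kN jN kj).
  rewrite nth_index // /r; lra.
have := jm _ kj (leq_trans kN (leq_maxl N m)).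
rewrite /r nth_index //; lra.
Qed.

Lemma H_sigma : sigma_compact HH.
Proof.
exists (fun n => Phi e n @` Dom n); split.
  move=> n; apply: continuous_compact; last exact: Dom_compact.
  by apply: continuous_subspaceT; exact: Phi_cont.
by apply/seteqP; split => h // _; have [n Hn] := cover h; exists n.
Qed.

End SC2.

Lemma hsepG (G : topologicalType) (op : G -> G -> G) (gyr : G -> G -> G -> G) (e : G) (inv : G -> G) :
  (forall a, op e a = a) -> (forall x, op (inv x) x = e) ->
  (forall x y z w, gyr x y z = gyr x y w -> z = w) ->
  (forall x y z, op x (op y z) = op (op x y) (gyr x y z)) ->
  accessible_space G -> continuous (fun p : G * G => op p.1 p.2) -> continuous inv ->
  forall x y : G, x != y -> exists O1 O2, [/\ open O1, open O2, O1 x, O2 y &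
     forall z, O1 z -> O2 z -> False].
Proof.
move=> eL invL ginj gass T1 opC invC x y xy.
have ne : op (inv x) y != e.
  apply/eqP => E; move/eqP: xy; apply; apply: (lcan eL invL ginj gass (a := inv x)).
  by rewrite E invL.
have [W [oW Wp We]] := T1 _ _ ne.
have : nbhs (op (inv x) y) W by apply: open_nbhs_nbhs; split => //; rewrite -inE.
move=> /(@opC (inv x, y)) /prod_nbhsE [P [Q [Px Qy PQ]]].
have := @invC x P Px => Px'.
have [A1 [oA1 A1x A1P]] := open_sub Px'; have [A2 [oA2 A2y A2Q]] := open_sub Qy.
exists A1, A2; split => // z z1 z2.
have := PQ (inv z, z) (conj (A1P _ z1) (A2Q _ z2)); rewrite /= invL.
by move: We; rewrite inE.
Qed.

Theorem mainTheorem12 (G : topologicalType) (opG : G -> G -> G)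
    (gyrG : G -> G -> G -> G) :
  topological_gyrogroup opG gyrG -> sigma_compact G ->
  exists (H : topologicalType) (opH : H -> H -> H) (gyrH : H -> H -> H -> H)
         (phi : G -> H),
    [/\ topological_gyrogroup opH gyrH, sigma_compact H,
        path_connected_space H, locally_path_connected H &
        [/\ groupoid_hom opG opH phi, embedding_onto_image phi,
            closed (range phi) & subgyrogroup opH gyrH (range phi)]].
Proof.
move=> [[_ [e0 _ [_ _ G3 gass gloop]]] T1 opC [e [inv [eLR invLR invC]]]] [K [Kc Kcov]].
have eL a : opG e a = a by have [] := eLR a.
have eR a : opG a e = a by have [] := eLR a.
have invL x : opG (inv x) x = e by have [] := invLR x.
have invR x : opG x (inv x) = e by have [] := invLR x.
have ginj x y z w : gyrG x y z = gyrG x y w -> z = w.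
  by have [_ inj _ _] := G3 x y I I; exact: inj.
have ghom x y z w : gyrG x y (opG z w) = opG (gyrG x y z) (gyrG x y w).
  by have [_ _ _ hom] := G3 x y I I; exact: hom.
have gass' x y z : opG x (opG y z) = opG (opG x y) (gyrG x y z) by exact: gass.
have gloop' x y z : gyrG (opG x y) y z = gyrG x y z by exact: gloop.
have : forall p : G * G * G, exists z, gyrG p.1.1 p.1.2 z = p.2.
  by move=> [[x y] w]; have [_ _ sur _] := G3 x y I I; have [z _ Hz] := sur w I; exists z.
move=> /choice [F HF].
pose pre := fun x y w => F (x, y, w).
have gpre x y w : gyrG x y (pre x y w) = w by exact: (HF (x, y, w)).
exists (Hc G e), (@Hop G opG e), (@Hgyr G gyrG e), (@phi G e).
split.
- split.
  + exact: (@Hgyrogroup G opG gyrG e inv pre eL eR invL invR ginj gpre ghom gass' gloop').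
  + exact: H_T1.
  + exact: Hop_cont.
  + exists (@phi G e e), (@Hinv G e inv); split.
    * by move=> a; split; apply: Hext => s Is; rewrite sv_op // sv_phi // ?eL ?eR.
    * by move=> x; split; apply: Hext => s Is; rewrite sv_op // sv_inv // sv_phi // ?invL ?invR.
    * exact: Hinv_cont.
- exact: H_sigma Kc Kcov.
- exact: H_pc.
- exact: H_lpc.
- split.
  + exact: phi_hom.
  + split; [exact: phi_inj|exact: phi_cont|move=> U oU; exact: phi_open].
  + apply: phi_closed; exact: (hsepG eL invL ginj gass' T1 opC invC).
  + exact: (@range_sub G opG gyrG e inv pre eL eR invL invR ginj gpre ghom gass' gloop').
Qed.
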